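(* With the notation of the context, let $r\ge1$, let $T^{(r)}$ be any unitary on $\mathcal H$ with $T^{(r)}(|j\rangle\otimes|0\rangle^{\otimes(2r+1)})=|\Psi^{(r)}_j\rangle$ for all $j\in[N]$ (here $|j\rangle,|0\rangle\in\mathbb C^{2N}$), let $\epsilon\ge0$ and let $\tilde T$ be a unitary with $\|\tilde T-T^{(r)}\|\le\epsilon/2$. Let $\Pi:\mathbb C^N\to\mathcal H$ be the isometry $\Pi|j\rangle=|j\rangle\otimes|0\rangle^{\otimes(2r+1)}$. Then $\big\|\Pi^\dagger\tilde T^\dagger S^{(r)}\tilde T\,\Pi-(H/d)^r\big\|\le\epsilon$; that is, $\tilde T^\dagger S^{(r)}\tilde T$ is a $(1,2rn+2r+n+2,\epsilon)$-block-encoding of $(H/d)^r$ (with $\epsilon=0$ for $\tilde T=T^{(r)}$).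
   Context: Let $N=2^n$, $[m]=\{0,\dots,m-1\}$, and $H$ an $N\times N$ Hermitian matrix with $\|H\|_{\max}=\max_{j,k}|H_{jk}|\le1$. For each $j\in[N]$ let $N(j)\subseteq[N]$ with $|N(j)|=d$, $\{k:H_{jk}\ne0\}\subseteq N(j)$, and $k\in N(j)\iff j\in N(k)$. A path of length $r$ from $j_0$ is $\mathbf j=(j_0,\dots,j_r)\in[N]^{r+1}$ with $j_{s+1}\in N(j_s)$ for all $s\in[r]$. Fix complex numbers $\sigma_{jk}$ with $|\sigma_{jk}|^2=|H_{jk}|$ and $\sigma_{jk}\overline{\sigma_{kj}}=\overline{H_{jk}}$ for all $j,k\in[N]$. $\mathcal H=(\mathbb C^{2N})^{\otimes(2r+2)}$ with basis $|a_0,\dots,a_{2r+1}\rangle$, $a_i\in[2N]$, and $$|\Psi^{(r)}_{j_0}\rangle=\frac1{\sqrt{d^r}}\sum_{\mathbf j}|j_0,\dots,j_r\rangle\otimes|j_0\rangle\bigotimes_{s\in[r]}\Big(\sigma_{j_sj_{s+1}}|j_{s+1}\rangle+\sqrt{1-|H_{j_sj_{s+1}}|}\,|j_{s+1}+N\rangle\Big)$$ (sum over paths of length $r$ from $j_0$); this is a unit vector. $S^{(r)}|a_0,\dots,a_{2r+1}\rangle=|a_{2r+1},\dots,a_0\rangle$. Block-encoding: $U$ is an $(\alpha,a,\epsilon)$-block-encoding of $A$ if $\|A-\alpha(\text{compression of }U\text{ to ancillas in }|0\rangle)\|\le\epsilon$ in spectral norm. Norms are spectral norms. *)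

(* Defs.v *)
From HB Require Import structures.
From mathcomp Require Import all_boot all_order all_algebra.
From mathcomp Require Import classical_sets reals.
From mathcomp Require Import complex.
Set Implicit Arguments. Unset Strict Implicit. Unset Printing Implicit Defensive.
Import Order.TTheory GRing.Theory Num.Theory.
Local Open Scope ring_scope.
Local Open Scope classical_set_scope.

Section LinAlg.
Variable R : realType.
Local Notation C := R[i].
Local Notation normc := (@ComplexField.Normc.normc R).
Local Notation "x %:C" := (real_complex R x) .

(* Finite-dimensional operators between coordinate spaces C^J -> C^I,
   indexed by arbitrary finite types (needed for tensor-product index sets). *)
Definition op (I J : finType) := I -> J -> C.

Definition vnorm (I : finType) (x : I -> C) : R :=
  Num.sqrt (\sum_i normc (x i) ^+ 2).

Definition opapply (I J : finType) (A : op I J) (x : J -> C) : I -> C :=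
  fun i => \sum_j A i j * x j.

Definition opnorm (I J : finType) (A : op I J) : R :=
  sup [set vnorm (opapply A x) | x in [set x : J -> C | vnorm x <= 1]].

Definition opmul (I J K : finType) (A : op I J) (B : op J K) : op I K :=
  fun i k => \sum_j A i j * B j k.

Definition opadj (I J : finType) (A : op I J) : op J I := fun j i => conjc (A i j).

Definition idop (I : finType) : op I I := fun i j => (i == j)%:R.

Definition unitary (I : finType) (A : op I I) : Prop :=
  opmul (opadj A) A = @idop I /\ opmul A (opadj A) = @idop I.

Definition sub_op (I J : finType) (A B : op I J) : op I J := fun i j => A i j - B i j.

Definition mxpow (m : nat) (A : 'M[C]_m) (k : nat) : 'M[C]_m :=
  iter k (fun B => A *m B) 1%:M.

Variables (N : nat).

(* basis index of H = (C^{2N})^{(x)(2r+2)} : a (2r+2)-tuple of elements of [2N] *)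
Definition Idx (r : nat) : finType := ((2 * r + 2).-tuple 'I_(N + N))%type.

Definition at_ (r : nat) (a : Idx r) (k : nat) : nat := nth 0%N [seq val x | x <- a] k.

Definition is_path (Nb : 'I_N -> {set 'I_N}) (r : nat) (j0 : 'I_N)
    (jp : (r.+1).-tuple 'I_N) : bool :=
  (nth j0 jp 0 == j0) && [forall s : 'I_r, nth j0 jp s.+1 \in Nb (nth j0 jp s)].

(* coefficient at basis index a of
   |j_0..j_r> (x) |j_0> (x) (x)_s (sigma_{j_s j_{s+1}} |j_{s+1}> + sqrt(1-|H_{j_s j_{s+1}}|) |j_{s+1}+N>) *)
Definition psi_term (H : 'M[C]_N) (sigma : 'I_N -> 'I_N -> C) (r : nat) (j0 : 'I_N)
    (jp : (r.+1).-tuple 'I_N) (a : Idx r) : C :=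
  (\prod_(i < r.+1) (at_ a i == nth j0 jp i)%:R) * (at_ a r.+1 == j0)%:R *
  \prod_(s < r)
    (let j := nth j0 jp s in let j' := nth j0 jp s.+1 in let x := at_ a (r + 2 + s) in
     if x == val j' then sigma j j'
     else if x == (N + val j')%N then (Num.sqrt (1 - normc (H j j')))%:C
     else 0).

Definition Psi (H : 'M[C]_N) (Nb : 'I_N -> {set 'I_N}) (d : nat)
    (sigma : 'I_N -> 'I_N -> C) (r : nat) (j0 : 'I_N) : Idx r -> C :=
  fun a => ((Num.sqrt (d%:R ^+ r : R))%:C)^-1 *
     \sum_(jp : (r.+1).-tuple 'I_N | is_path Nb j0 jp) psi_term H sigma j0 jp a.

Definition Pi (r : nat) : op (Idx r) 'I_N :=
  fun a j => ([seq val x | x <- a] == val j :: nseq (2 * r + 1) 0%N)%:R.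

Definition Swap (r : nat) : op (Idx r) (Idx r) :=
  fun a b => ((a : seq _) == rev b)%:R.

End LinAlg.

(* Main.v *)
Require Import Defs.
From HB Require Import structures.
From mathcomp Require Import all_boot all_order all_algebra.
From mathcomp Require Import classical_sets reals.
From mathcomp Require Import complex.
From mathcomp Require Import boolp.
From mathcomp Require Import ring lra zify.
Import Order.TTheory GRing.Theory Num.Theory.
Local Open Scope ring_scope.
Set Implicit Arguments. Unset Strict Implicit. Unset Printing Implicit Defensive.

Section Anal.
Variable R : realType.
Local Notation C := R[i].
Local Notation normc := (@ComplexField.Normc.normc R).
Local Notation "x %:C" := (real_complex R x).

Lemma normcC (z : C) : `|z| = (normc z)%:C.
Proof. by case: z => a b; rewrite normc_def. Qed.

Lemma normc_ge0 (z : C) : 0 <= normc z.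
Proof. by case: z => a b /=; rewrite sqrtr_ge0. Qed.

Lemma normc_sq (z : C) : (normc z ^+ 2)%:C = z * z^*.
Proof. by rewrite rmorphXn /= -normcC sqr_normc. Qed.

Lemma normc_conj (z : C) : normc z^* = normc z.
Proof. by apply: (@complexI R); rewrite -!normcC normcJ. Qed.

Lemma normc_real (x : R) : normc x%:C = `|x|.
Proof. by rewrite /= expr0n /= addr0 sqrtr_sqr. Qed.

Lemma normc_sum (I : finType) (F : I -> C) :
  normc (\sum_i F i) <= \sum_i normc (F i).
Proof.
elim/big_rec2: _ => [|i y z _ Hz]; first by rewrite ComplexField.Normc.normc0.
by apply: le_trans (le_normcD _ _) _; rewrite lerD2l.
Qed.

Lemma CS (I : finType) (a b : I -> R) :
  (\sum_i a i * b i) ^+ 2 <= (\sum_i a i ^+ 2) * (\sum_i b i ^+ 2).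
Proof.
set A := \sum_i a i ^+ 2; set B := \sum_i b i ^+ 2; set S := \sum_i a i * b i.
have E : \sum_i \sum_j (a i * b j - a j * b i) ^+ 2 = 2%:R * (A * B - S ^+ 2).
  transitivity (\sum_i (a i ^+ 2 * B + b i ^+ 2 * A - 2%:R * (a i * b i * S))).
    apply: eq_bigr => i _.
    rewrite /A /B /S !big_distrr /= -big_split -sumrB /=.
    by apply: eq_bigr => j _; ring.
  rewrite sumrB big_split /= -!big_distrl /= -!big_distrr /= -/A -/B -/S.
  rewrite -big_distrl /= -/S; ring.
have : 0 <= \sum_i \sum_j (a i * b j - a j * b i) ^+ 2.
  by apply: sumr_ge0 => i _; apply: sumr_ge0 => j _; apply: sqr_ge0.
by rewrite E pmulr_rge0 ?ltr0n // subr_ge0.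
Qed.

Definition sq (I : finType) (x : I -> C) : R := \sum_i normc (x i) ^+ 2.
Definition ip (I : finType) (x y : I -> C) : C := \sum_i (x i)^* * y i.

Lemma sq_ge0 (I : finType) (x : I -> C) : 0 <= sq x.
Proof. by apply: sumr_ge0 => i _; apply: sqr_ge0. Qed.

Lemma vnormE (I : finType) (x : I -> C) : vnorm x = Num.sqrt (sq x).
Proof. by []. Qed.

Lemma vnorm_ge0 (I : finType) (x : I -> C) : 0 <= vnorm x.
Proof. exact: sqrtr_ge0. Qed.

Lemma sq_vnorm (I : finType) (x : I -> C) : vnorm x ^+ 2 = sq x.
Proof. by rewrite vnormE sqr_sqrtr // sq_ge0. Qed.

Lemma sqC (I : finType) (x : I -> C) : (sq x)%:C = ip x x.
Proof.
rewrite /sq /ip rmorph_sum /=; apply: eq_bigr => i _.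
by rewrite normc_sq mulrC.
Qed.

Lemma le_sqrt_sq (x : R) : x <= Num.sqrt (x ^+ 2).
Proof. by rewrite sqrtr_sqr ler_norm. Qed.

Lemma CS2 (I : finType) (a b : I -> R) :
  \sum_i a i * b i <= Num.sqrt (\sum_i a i ^+ 2) * Num.sqrt (\sum_i b i ^+ 2).
Proof.
apply: le_trans (le_sqrt_sq _) _.
rewrite -sqrtrM; last by apply: sumr_ge0 => i _; apply: sqr_ge0.
by rewrite ler_wsqrtr // CS.
Qed.

Lemma normc_ip (I : finType) (x y : I -> C) : normc (ip x y) <= vnorm x * vnorm y.
Proof.
apply: le_trans (normc_sum _) _.
under eq_bigr do rewrite ComplexField.Normc.normcM normc_conj.
exact: CS2.
Qed.

Lemma vnormD (I : finType) (x y : I -> C) :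
  vnorm (fun i => x i + y i) <= vnorm x + vnorm y.
Proof.
rewrite [X in X <= _]vnormE.
apply: (@le_trans _ _ (Num.sqrt ((vnorm x + vnorm y) ^+ 2))); last first.
  by rewrite sqrtr_sqr ger0_norm // addr_ge0 ?vnorm_ge0.
apply: ler_wsqrtr; rewrite sqrrD !sq_vnorm.
apply: (@le_trans _ _ (\sum_i (normc (x i) + normc (y i)) ^+ 2)).
  apply: ler_sum => i _; rewrite ler_sqr ?nnegrE ?normc_ge0 ?addr_ge0 ?normc_ge0 //.
  exact: le_normcD.
under eq_bigr do rewrite sqrrD.
rewrite big_split big_split /= -/(sq x) -/(sq y) lerD2r lerD2l sumrMnl lerMn2r /=.
exact: CS2.
Qed.

Lemma vnormN (I : finType) (x : I -> C) : vnorm (fun i => - x i) = vnorm x.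
Proof. by rewrite !vnormE /sq; under eq_bigr do rewrite normcN. Qed.

Lemma vnormB (I : finType) (x y : I -> C) :
  vnorm (fun i => x i - y i) <= vnorm x + vnorm y.
Proof. by apply: le_trans (vnormD _ _) _; rewrite vnormN. Qed.

Lemma vnorm0 (I : finType) : vnorm (fun i : I => 0 : C) = 0.
Proof.
rewrite vnormE /sq big1 ?sqrtr0 // => i _.
by rewrite ComplexField.Normc.normc0 expr0n.
Qed.

Lemma opapply_mul (I J K : finType) (A : op R I J) (B : op R J K) x :
  opapply (opmul A B) x = opapply A (opapply B x).
Proof.
apply: funext => i; rewrite /opapply /opmul.
under eq_bigr do rewrite big_distrl /=.
rewrite exchange_big /=; apply: eq_bigr => j _.
by rewrite big_distrr /=; apply: eq_bigr => k _; rewrite mulrA.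
Qed.

Lemma opapply_sub (I J : finType) (A B : op R I J) x :
  opapply (sub_op A B) x = fun i => opapply A x i - opapply B x i.
Proof.
apply: funext => i; rewrite /opapply /sub_op -sumrB.
by apply: eq_bigr => j _; rewrite mulrBl.
Qed.

Lemma opapplyB (I J : finType) (A : op R I J) x y :
  opapply A (fun j => x j - y j) = fun i => opapply A x i - opapply A y i.
Proof.
apply: funext => i; rewrite /opapply -sumrB.
by apply: eq_bigr => j _; rewrite mulrBr.
Qed.

Lemma opapply_id (I : finType) (x : I -> C) : opapply (@idop R I) x = x.
Proof.
apply: funext => i; rewrite /opapply /idop (bigD1 i) //= eqxx mul1r big1 ?addr0 //.
by move=> j /negPf; rewrite eq_sym => ->; rewrite mul0r.
Qed.

Lemma opadjK (I J : finType) (A : op R I J) : opadj (opadj A) = A.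
Proof. by apply: funext => i; apply: funext => j; rewrite /opadj conjcK. Qed.

Lemma ip_adj (I J : finType) (A : op R I J) x y :
  ip (opapply A x) y = ip x (opapply (opadj A) y).
Proof.
rewrite /ip /opapply /opadj.
under eq_bigr do rewrite rmorph_sum /= big_distrl /=.
rewrite exchange_big /=; apply: eq_bigr => j _.
rewrite big_distrr /=; apply: eq_bigr => i _.
by rewrite rmorphM /= -!mulrA [_ * (_ * y i)]mulrC -!mulrA [y i * _]mulrC.
Qed.

Lemma isometry_vnorm (I J : finType) (A : op R I J) x :
  opmul (opadj A) A = @idop R J -> vnorm (opapply A x) = vnorm x.
Proof.
move=> HA; rewrite !vnormE; congr Num.sqrt; apply: (@complexI R).
rewrite !sqC ip_adj -opapply_mul HA opapply_id //.
Qed.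

Lemma coisometry_vnorm (I J : finType) (A : op R I J) x :
  opmul A (opadj A) = @idop R I -> vnorm (opapply A x) <= vnorm x.
Proof.
move=> HA.
have Hi : vnorm (opapply (opadj A) (opapply A x)) = vnorm (opapply A x).
  by apply: isometry_vnorm; rewrite opadjK.
have H1 : vnorm (opapply A x) ^+ 2 <= vnorm x * vnorm (opapply A x).
  rewrite sq_vnorm -[sq _]ger0_norm ?sq_ge0 // -normc_real sqC ip_adj.
  rewrite -Hi; exact: normc_ip.
have [->|pos] := eqVneq (vnorm (opapply A x)) 0; first by rewrite vnorm_ge0.
have gt0 : 0 < vnorm (opapply A x) by rewrite lt_def pos vnorm_ge0.
by move: H1; rewrite expr2 ler_pM2r.
Qed.

Lemma normc_le_vnorm (I : finType) (x : I -> C) j : normc (x j) <= vnorm x.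
Proof.
rewrite -[normc (x j)]ger0_norm ?normc_ge0 // -sqrtr_sqr vnormE ler_wsqrtr //.
by rewrite /sq (bigD1 j) //= lerDl sumr_ge0 // => i _; apply: sqr_ge0.
Qed.

Lemma vnorm_le_sum (I : finType) (y : I -> C) : vnorm y <= \sum_i normc (y i).
Proof.
rewrite -[X in _ <= X]ger0_norm ?sumr_ge0 // => [|i _]; last exact: normc_ge0.
rewrite -sqrtr_sqr vnormE ler_wsqrtr // expr2 big_distrl /= /sq.
apply: ler_sum => i _; rewrite big_distrr /= (bigD1 i) //= expr2 lerDl.
by apply: sumr_ge0 => j _; rewrite mulr_ge0 ?normc_ge0.
Qed.

Lemma opapply_bound (I J : finType) (A : op R I J) x :
  vnorm x <= 1 -> vnorm (opapply A x) <= \sum_i \sum_j normc (A i j).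
Proof.
move=> Hx; apply: le_trans (vnorm_le_sum _) _; apply: ler_sum => i _.
apply: le_trans (normc_sum _) _; apply: ler_sum => j _.
rewrite ComplexField.Normc.normcM -[X in _ <= X]mulr1 ler_wpM2l ?normc_ge0 //.
exact: le_trans (normc_le_vnorm _ _) Hx.
Qed.

Lemma opnorm_ge (I J : finType) (A : op R I J) x :
  vnorm x <= 1 -> vnorm (opapply A x) <= opnorm A.
Proof.
move=> Hx; apply: ub_le_sup; last by exists x.
exists (\sum_i \sum_j normc (A i j)) => _ [y Hy <-].
exact: opapply_bound.
Qed.

Lemma opnorm_le (I J : finType) (A : op R I J) c :
  (forall x, vnorm x <= 1 -> vnorm (opapply A x) <= c) -> opnorm A <= c.
Proof.
move=> H; apply: ge_sup.
  by exists (vnorm (opapply A (fun _ => 0))); exists (fun _ => 0) => //; rewrite /= vnorm0.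
by move=> _ [y Hy <-]; apply: H.
Qed.

Lemma opapply_cancel (I J : finType) (A : op R I J) (B : op R J I) x :
  opmul A B = @idop R I -> opapply A (opapply B x) = x.
Proof. by move=> H; rewrite -opapply_mul H opapply_id. Qed.

Definition Mop (I J : finType) (P : op R I J) (S U : op R I I) :=
  opmul (opadj P) (opmul (opadj U) (opmul S (opmul U P))).

Lemma perturb (I J : finType) (P : op R I J) (S T Tt : op R I I) eps :
  opmul (opadj P) P = @idop R J -> opmul (opadj S) S = @idop R I ->
  unitary T -> unitary Tt -> opnorm (sub_op Tt T) <= eps / 2 ->
  opnorm (sub_op (Mop P S Tt) (Mop P S T)) <= eps.
Proof.
move=> HP HS [HT1 HT2] [HTt1 HTt2] Heps; apply: opnorm_le => x Hx.
set v := opapply P x.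
have Hv : vnorm v <= 1 by rewrite /v isometry_vnorm.
set w := opapply S (opapply T v).
set z := opapply (opadj T) w.
have Hz : vnorm z <= 1.
  by rewrite /z isometry_vnorm ?opadjK // /w isometry_vnorm // isometry_vnorm.
have E : opapply (sub_op (Mop P S Tt) (Mop P S T)) x =
   opapply (opadj P) (fun i =>
     opapply (opadj Tt) (opapply S (opapply (sub_op Tt T) v)) i +
     - opapply (opadj Tt) (opapply (sub_op Tt T) z) i).
  rewrite opapply_sub /Mop !opapply_mul -/v -/w -/z -opapplyB.
  congr opapply; apply: funext => k.
  rewrite !opapply_sub opapplyB (opapplyB (opadj Tt)).
  have -> : opapply T z = w by apply: opapply_cancel.
  rewrite opapplyB.
  have -> : opapply (opadj Tt) (opapply Tt z) = z by apply: opapply_cancel.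
  rewrite -/w; ring.
rewrite E.
apply: le_trans (coisometry_vnorm _ _) _; first by rewrite opadjK.
apply: le_trans (vnormD _ _) _.
have HTa : opmul (opadj (opadj Tt)) (opadj Tt) = @idop R I by rewrite opadjK.
rewrite vnormN !(isometry_vnorm _ HTa) (isometry_vnorm _ HS).
have h1 := le_trans (opnorm_ge (sub_op Tt T) Hv) Heps.
have h2 := le_trans (opnorm_ge (sub_op Tt T) Hz) Heps.
lra.
Qed.
End Anal.

Section Comb.
Variable R : realType.
Local Notation C := R[i].
Local Notation normc := (@ComplexField.Normc.normc R).
Local Notation "x %:C" := (real_complex R x).

Lemma sum_tuple_prod (m : nat) (T : finType) (F : nat -> T -> C) :
  \sum_(a : m.-tuple T) \prod_(p < m) F p (tnth a p) =
  \prod_(p < m) \sum_(x : T) F p x.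
Proof.
rewrite bigA_distr_bigA /=.
rewrite (reindex (@finfun_of_tuple T m)) /=; last first.
  by exists tuple_of_finfun => x _; [exact: finfun_of_tupleK | exact: tuple_of_finfunK].
by apply: eq_bigr => a _; apply: eq_bigr => p _; rewrite ffunE.
Qed.

Lemma at_tnth (N r : nat) (a : Idx N r) (p : 'I_(2 * r + 2)) :
  at_ a p = tnth a p.
Proof.
rewrite /at_ (nth_map (tnth a p)) ?size_tuple // -tnth_nth //.
Qed.

Lemma at_rev (N r : nat) (a : Idx N r) (p : nat) : (p < 2 * r + 2)%N ->
  at_ (rev_tuple a) p = at_ a (2 * r + 2 - p.+1).
Proof.
move=> Hp; rewrite /at_ /= map_rev nth_rev ?size_map ?size_tuple //.
Qed.

Lemma sum_ord_eq (M : nat) (f : nat -> C) (v : nat) : (v < M)%N ->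
  \sum_(x < M) (val x == v)%:R * f x = f v.
Proof.
move=> Hv; rewrite (bigD1 (Ordinal Hv)) //= eqxx mul1r big1 ?addr0 // => x Hx.
suff /negPf -> : val x != v by rewrite mul0r.
by apply: contra Hx => /eqP Hxv; apply/eqP/val_inj.
Qed.

Section Fac.
Variables (N : nat) (H : 'M[C]_N) (sigma : 'I_N -> 'I_N -> C) (r : nat).

Definition Gf (j0 : 'I_N) (jp : (r.+1).-tuple 'I_N) (s x : nat) : C :=
  let j := nth j0 jp s in let j' := nth j0 jp s.+1 in
  if x == val j' then sigma j j'
  else if x == (N + val j')%N then (Num.sqrt (1 - normc (H j j')))%:C else 0.

Definition Ff (j0 : 'I_N) (jp : (r.+1).-tuple 'I_N) (p x : nat) : C :=
  if (p < r.+1)%N then (x == nth j0 jp p)%:R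
  else if p == r.+1 then (x == j0)%:R else Gf j0 jp (p - (r + 2)) x.

Lemma psi_prod j0 jp (a : Idx N r) :
  psi_term H sigma j0 jp a = \prod_(p < 2 * r + 2) Ff j0 jp p (at_ a p).
Proof.
rewrite -(big_mkord xpredT (fun p => Ff j0 jp p (at_ a p))).
rewrite (big_cat_nat _ (n := r.+1)) //=; last by lia.
rewrite (big_cat_nat _ (m := r.+1) (n := r.+2)) //=; last by lia.
rewrite big_nat1 -{1}(add0n r.+2) big_addn big_mkord.
rewrite (_ : (2 * r + 2 - r.+2)%N = r); last by lia.
rewrite big_mkord /psi_term mulrA; congr (_ * _ * _).
- by apply: eq_bigr => i _; rewrite /Ff ltn_ord.
- by rewrite /Ff ltnn eqxx.
- apply: eq_bigr => s _; rewrite /Ff.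
  have -> : (addn s r.+2 < r.+1)%N = false by lia.
  have -> : (addn s r.+2 == r.+1) = false by lia.
  have -> : subn (addn s r.+2) (addn r 2) = s by lia.
  by have -> : addn (addn r 2) s = addn s r.+2 by lia.
Qed.

Lemma inner_fac j jp k kp :
  \sum_(a : Idx N r) conjc (psi_term H sigma j jp a) * psi_term H sigma k kp (rev_tuple a)
  = \prod_(p < 2 * r + 2) \sum_(x : 'I_(N + N))
       conjc (Ff j jp p x) * Ff k kp (2 * r + 2 - p.+1) x.
Proof.
rewrite -(@sum_tuple_prod (2 * r + 2) _ (fun p (x : 'I_(N + N)) =>
    conjc (Ff j jp p x) * Ff k kp (2 * r + 2 - p.+1) x)).
apply: eq_bigr => a _.
rewrite !psi_prod rmorph_prod /=.
rewrite [X in _ * X](reindex_inj rev_ord_inj) /= -big_split /=.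
apply: eq_bigr => p _; rewrite at_rev ?rev_ord_proof // !at_tnth.
congr (_ * _); rewrite (_ : (2 * r + 2 - (2 * r + 2 - p.+1).+1)%N = p) ?at_tnth //.
by have := ltn_ord p; lia.
Qed.

Lemma sum_ord_eq' (M : nat) (f : nat -> C) (v : nat) : (v < M)%N ->
  \sum_(x < M) conjc (f x) * (val x == v)%:R = conjc (f v).
Proof.
move=> Hv; rewrite -(sum_ord_eq (fun x => conjc (f x)) Hv).
by apply: eq_bigr => x _; rewrite mulrC.
Qed.

Lemma inner_eval j jp k kp :
  \prod_(p < 2 * r + 2) \sum_(x : 'I_(N + N))
       conjc (Ff j jp p x) * Ff k kp (2 * r + 2 - p.+1) x =
  (\prod_(s < r) Gf k kp (r - s.+1) (nth j jp s)) *
  ((nth j jp r : nat) == k)%:R * ((j : nat) == nth k kp r)%:R *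
  \prod_(s < r) conjc (Gf j jp s (nth k kp (r - s.+1))).
Proof.
have ltN (i : 'I_N) : (i < N + N)%N by have := ltn_ord i; lia.
rewrite -(big_mkord xpredT (fun p => \sum_(x : 'I_(N + N))
       conjc (Ff j jp p x) * Ff k kp (2 * r + 2 - p.+1) x)).
rewrite (big_cat_nat _ (n := r)) //=; last by lia.
rewrite (big_cat_nat _ (m := r) (n := r.+1)) //=; last by lia.
rewrite (big_cat_nat _ (m := r.+1) (n := r.+2)) //=; last by lia.
rewrite !big_nat1 (big_addn 0 (2 * r + 2) r.+2) !big_mkord.
rewrite (_ : (2 * r + 2 - r.+2)%N = r); last by lia.
rewrite !mulrA; congr (_ * _ * _ * _).
- apply: eq_bigr => s _; rewrite /Ff.
  have -> : (nat_of_ord s < r.+1)%N by have := ltn_ord s; lia.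
  under eq_bigr do rewrite rmorph_nat.
  have -> : (subn (addn (muln 2 r) 2) s.+1 < r.+1)%N = false by have := ltn_ord s; lia.
  have -> : (subn (addn (muln 2 r) 2) s.+1 == r.+1) = false by have := ltn_ord s; lia.
  have -> : subn (subn (addn (muln 2 r) 2) s.+1) (addn r 2) = (r - s.+1)%N by have := ltn_ord s; lia.
  by rewrite sum_ord_eq.
- rewrite /Ff ltnSn.
  have -> : (subn (addn (muln 2 r) 2) r.+1 < r.+1)%N = false by lia.
  have -> : (subn (addn (muln 2 r) 2) r.+1 == r.+1) = true by lia.
  under eq_bigr do rewrite rmorph_nat.
  by rewrite (sum_ord_eq (fun x => (x == k)%:R)).
- rewrite /Ff ltnn eqxx.
  under eq_bigr do rewrite rmorph_nat.
  by rewrite ltnSn (sum_ord_eq (fun x => (x == nth k kp r)%:R)).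
- apply: eq_bigr => s _; rewrite /Ff.
  have -> : (addn s r.+2 < r.+1)%N = false by lia.
  have -> : (addn s r.+2 == r.+1) = false by lia.
  have -> : subn (addn s r.+2) (addn r 2) = s by lia.
  have -> : subn (addn (muln 2 r) 2) (addn s r.+2).+1 = (r - s.+1)%N by lia.
  have -> : (r - s.+1 < r.+1)%N by lia.
  by rewrite sum_ord_eq'.
Qed.

Lemma nthD (x y : 'I_N) (t : (r.+1).-tuple 'I_N) i : (i <= r)%N -> nth x t i = nth y t i.
Proof. by move=> Hi; apply: set_nth_default; rewrite size_tuple. Qed.

Lemma nth_revt (x : 'I_N) (t : (r.+1).-tuple 'I_N) i : (i <= r)%N ->
  nth x (rev_tuple t) i = nth x t (r - i).
Proof. by move=> Hi; rewrite /= nth_rev ?size_tuple // subSS. Qed.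

Lemma Gf_other (j : 'I_N) (jp : (r.+1).-tuple 'I_N) s (x : 'I_N) :
  ((x : nat) != (nth j jp s.+1 : nat)) -> Gf j jp s x = 0.
Proof.
move=> /negPf Hx; rewrite /Gf Hx.
have -> : ((x : nat) == N + nth j jp s.+1)%N = false.
  by apply/negP => /eqP; have := ltn_ord x; lia.
by [].
Qed.

Lemma Gf_eq (j : 'I_N) (jp : (r.+1).-tuple 'I_N) s (x : 'I_N) :
  ((x : nat) == (nth j jp s.+1 : nat)) ->
  Gf j jp s x = sigma (nth j jp s) (nth j jp s.+1).
Proof. by move=> Hx; rewrite /Gf Hx. Qed.

Lemma sum_kp (Nb : 'I_N -> {set 'I_N})
  (hsym : forall j k, (k \in Nb j) = (j \in Nb k))
  (hsig : forall j k, sigma j k * conjc (sigma k j) = conjc (H j k))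
  (hherm : forall j k, H j k = conjc (H k j))
  (j k : 'I_N) (jp : (r.+1).-tuple 'I_N) : is_path Nb j jp ->
  \sum_(kp : (r.+1).-tuple 'I_N | is_path Nb k kp)
    ((\prod_(s < r) Gf k kp (r - s.+1) (nth j jp s)) *
     ((nth j jp r : nat) == k)%:R * ((j : nat) == nth k kp r)%:R *
     \prod_(s < r) conjc (Gf j jp s (nth k kp (r - s.+1))))
  = ((nth j jp r : nat) == k)%:R * \prod_(s < r) H (nth j jp s) (nth j jp s.+1).
Proof.
move=> /andP [/eqP Hj0 /forallP Hpath].
have [Hk|Hk] := eqVneq (nth j jp r : nat) k; last first.
  by rewrite (_ : false%:R = 0 :> C) // mul0r big1 // => kp _; rewrite mulr0 !mul0r.
have Hk' : nth j jp r = k by apply: val_inj.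
rewrite (_ : true%:R = 1 :> C) // mul1r.
set kq := rev_tuple jp.
have Pkq : is_path Nb k kq.
  apply/andP; split.
    by rewrite nth_revt // subn0 (nthD k j) // Hk'.
  apply/forallP => s.
  have Hs := ltn_ord s.
  rewrite !nth_revt //; last by apply: ltnW.
  have Ht : (subn r s.+1 < r)%N by lia.
  have := Hpath (Ordinal Ht); rewrite /= hsym.
  have -> : (subn r s.+1).+1 = subn r s by lia.
  by rewrite !(nthD k j) //; lia.
rewrite (bigD1 kq) //= [X in (_ + X)%R]big1 ?addr0; last first.
  move=> kp /andP [Pkp Hne].
  have [Hr|Hr] := eqVneq (j : nat) (nth k kp r); last by rewrite (_ : false%:R = 0 :> C) // mulr0 mul0r.
  case: (boolP [forall s : 'I_r, (nth k kp (r - s.+1) : nat) == nth j jp s.+1]) => [/forallP Hall|].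
    exfalso; move/eqP: Hne; apply; apply: val_inj => /=.
    apply: (@eq_from_nth _ j); first by rewrite !size_tuple.
    move=> i; rewrite size_tuple => Hi.
    rewrite (_ : nth j (rev jp) i = nth j kq i) // nth_revt //.
    have [Hir|Hir] := eqVneq i r.
      rewrite Hir subnn Hj0 (nthD j k) //; exact: val_inj.
    have Hir' : (i < r)%N by lia.
    have Ht : (subn r i.+1 < r)%N by lia.
    have := Hall (Ordinal Ht); rewrite /=.
    rewrite (_ : subn r (subn r i.+1).+1 = i); last by lia.
    rewrite (_ : (subn r i.+1).+1 = subn r i); last by lia.
    by move=> /eqP Heq; rewrite (nthD j k) //; try lia; apply: val_inj.
  move=> /forallPn [s Hs].
  have -> : \prod_(s0 < r) conjc (Gf j jp s0 (nth k kp (r - s0.+1))) = 0.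
    by rewrite (bigD1 s) //= Gf_other // rmorph0 mul0r.
  by rewrite mulr0.
have Ekq : rev jp = tval kq by [].
rewrite ?Ekq.
have -> : ((j : nat) == nth k kq r) = true.
  by rewrite nth_revt // subnn (nthD k j) // Hj0 eqxx.
rewrite (_ : true%:R = 1 :> C) // !mulr1.
transitivity (\prod_(s < r) (Gf k kq (r - s.+1) (nth j jp s) *
   conjc (Gf j jp s (nth k kq (r - s.+1))))); first by rewrite big_split.
apply: eq_bigr => s _.
have Hs := ltn_ord s.
have E1 : (subn r s.+1).+1 = subn r s by lia.
rewrite (Gf_eq (x := nth j jp s)); last first.
  by rewrite E1 nth_revt; [rewrite (_ : subn r (subn r s) = s) ?(nthD k j) //; lia | lia].
rewrite (Gf_eq (x := nth k kq (r - s.+1))); last first.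
  by rewrite nth_revt; [rewrite (_ : subn r (subn r s.+1) = s.+1) ?(nthD k j) //; lia | lia].
rewrite E1 !nth_revt; try lia.
rewrite (_ : subn r (subn r s) = s); last by lia.
rewrite (_ : subn r (subn r s.+1) = s.+1); last by lia.
rewrite !(nthD k j) //; try lia.
by rewrite hsig -hherm.
Qed.

End Fac.

Lemma mxpow_paths (N : nat) (A : 'M[C]_N) (r : nat) (x0 j k : 'I_N) :
  mxpow A r j k = \sum_(jp : (r.+1).-tuple 'I_N | (nth x0 jp 0 == j) && (nth x0 jp r == k))
     \prod_(s < r) A (nth x0 jp s) (nth x0 jp s.+1).
Proof.
elim: r j k => [|r IH] j k.
  rewrite /mxpow /= mxE.
  rewrite (reindex (fun x : 'I_N => [tuple x])) /=; last first.
    exists (fun t : 1.-tuple 'I_N => thead t) => [x _ | t _]; first by rewrite theadE.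
    by rewrite [RHS]tuple_eta; apply: val_inj => /=; case: t => [[|? []]].
  under eq_bigr do rewrite big_ord0.
  have [<-|Hjk] := eqVneq j k.
    by rewrite (big_pred1 j) // => x; rewrite /= andbb.
  rewrite big_pred0 // => x /=.
  by apply/negP => /andP [/eqP -> /eqP]; apply/eqP.
rewrite /mxpow iterS -/(mxpow A r) mxE.
under eq_bigr do rewrite (IH _ k) big_distrr /=.
rewrite (reindex_onto (fun tp : (r.+1).-tuple 'I_N => [tuple of j :: tp])
          (fun jp : (r.+2).-tuple 'I_N => [tuple of behead jp])) /=; last first.
  move=> jp /andP [/eqP Hj _]; apply: val_inj => /=.
  by case: jp Hj => [[|y t] //= _] ->.
rewrite (exchange_big_dep (fun tp : (r.+1).-tuple 'I_N => nth x0 tp r == k)) /=; last first.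
  by move=> l tp _ /andP [].
apply: eq_big => tp.
  by rewrite eqxx /= (_ : [tuple of behead [tuple of j :: tp]] == tp) ?andbT //; apply/eqP/val_inj.
move=> Hk; rewrite (big_pred1 (nth x0 tp 0)); last first.
  by move=> l; rewrite /= Hk andbT eq_sym.
by rewrite big_ord_recl /=.
Qed.

Lemma mxpowZ (N : nat) (a : C) (A : 'M[C]_N) (r : nat) :
  mxpow (a *: A) r = a ^+ r *: mxpow A r.
Proof.
elim: r => [|r IH]; first by rewrite /mxpow /= scale1r.
by rewrite /mxpow iterS -/(mxpow _ r) IH iterS -/(mxpow _ r) -scalemxAr scalemxAl scalerA -exprSr scalemxAl.
Qed.

Lemma scal_sq (d r : nat) :
  conjc ((Num.sqrt (d%:R ^+ r : R))%:C)^-1 * ((Num.sqrt (d%:R ^+ r : R))%:C)^-1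
  = ((d%:R : C)^-1) ^+ r.
Proof.
rewrite conjc_inv conjc_real -invfM -rmorphM /=.
rewrite -expr2 sqr_sqrtr ?exprn_ge0 ?ler0n // rmorphXn /= rmorph_nat exprVn //.
Qed.

Section Fac2.
Variables (N : nat) (H : 'M[C]_N) (sigma : 'I_N -> 'I_N -> C) (r : nat).

Lemma paths_restrict (Nb : 'I_N -> {set 'I_N})
  (hNb : forall j k, H j k != 0 -> k \in Nb j) (j k : 'I_N) :
  \sum_(jp : (r.+1).-tuple 'I_N | is_path Nb j jp)
     ((nth j jp r : nat) == k)%:R * \prod_(s < r) H (nth j jp s) (nth j jp s.+1)
  = \sum_(jp : (r.+1).-tuple 'I_N | (nth j jp 0 == j) && (nth j jp r == k))
     \prod_(s < r) H (nth j jp s) (nth j jp s.+1).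
Proof.
rewrite big_mkcond [RHS]big_mkcond; apply: eq_bigr => jp _.
rewrite /is_path.
have [Hk|Hk] := eqVneq (nth j jp r) k.
  rewrite Hk eqxx andbT mul1r.
  case: (nth j jp 0 == j) => //=.
  case: (boolP [forall s : 'I_r, nth j jp s.+1 \in Nb (nth j jp s)]) => // /forallPn [s Hs].
  rewrite (bigD1 s) //=.
  have -> : H (nth j jp s) (nth j jp s.+1) = 0.
    by apply/eqP; apply: contraNT Hs; apply: hNb.
  by rewrite mul0r.
have -> : ((nth j jp r : nat) == k) = false.
  by apply/negP => /eqP Hv; move/eqP: Hk; apply; apply: val_inj.
by rewrite andbF mul0r; case: ifP.
Qed.

Lemma core (Nb : 'I_N -> {set 'I_N}) (d : nat)
  (hsym : forall j k, (k \in Nb j) = (j \in Nb k))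
  (hsig : forall j k, sigma j k * conjc (sigma k j) = conjc (H j k))
  (hherm : forall j k, H j k = conjc (H k j))
  (hNb : forall j k, H j k != 0 -> k \in Nb j) (j k : 'I_N) :
  \sum_(b : Idx N r) conjc (Psi H Nb d sigma j b) * Psi H Nb d sigma k (rev_tuple b)
  = mxpow ((d%:R)^-1 *: H) r j k.
Proof.
rewrite mxpowZ mxE (mxpow_paths _ _ j) -(scal_sq d r) -(paths_restrict hNb).
set c := ((Num.sqrt (d%:R ^+ r : R))%:C)^-1.
set cc := conjc c * c.
transitivity (\sum_(b : Idx N r) \sum_(jp | is_path Nb j jp) \sum_(kp | is_path Nb k kp)
   cc * (conjc (psi_term H sigma j jp b) * psi_term H sigma k kp (rev_tuple b))).
  apply: eq_bigr => b _; rewrite /Psi -/c rmorphM rmorph_sum mulrACA big_distrl.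
  rewrite big_distrr; apply: eq_bigr => jp _.
  rewrite big_distrr big_distrr; apply: eq_bigr => kp _.
  by [].
clearbody cc.
rewrite [LHS]exchange_big /= big_distrr /=; apply: eq_bigr => jp Hjp.
rewrite exchange_big /=.
under eq_bigr do rewrite -big_distrr /=.
rewrite -big_distrr /= -(sum_kp hsym hsig hherm k Hjp).
congr (_ * _); apply: eq_bigr => kp _.
by rewrite inner_fac inner_eval.
Qed.
End Fac2.
End Comb.

Section Fin.
Variable R : realType.
Local Notation C := R[i].

Lemma nat_sq (b : bool) : (b%:R * b%:R : C) = b%:R.
Proof. by case: b; rewrite ?mul1r ?mul0r. Qed.

Lemma Pi_iso (N r : nat) : opmul (opadj (@Pi R N r)) (@Pi R N r) = @idop R 'I_N.
Proof.
apply: funext => j; apply: funext => k; rewrite /opmul /opadj /Pi /idop.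
under eq_bigr do rewrite rmorph_nat.
have [<-|Hjk] := eqVneq j k; last first.
  apply: big1 => a _.
  case: eqP => [Ha|]; case: eqP => [Hb|] //; rewrite ?mul0r ?mulr0 //.
  by move: Hjk; rewrite Ha in Hb; case: Hb => /val_inj ->; rewrite eqxx.
under eq_bigr do rewrite nat_sq.
have z0lt : (0 < N + N)%N by have := ltn_ord j; lia.
set L := val j :: nseq (2 * r + 1) 0%N.
set s := widen_ord (leq_addr N N) j :: nseq (2 * r + 1) (Ordinal z0lt).
have Hs : size s == (2 * r + 2)%N by rewrite /= size_nseq; apply/eqP; lia.
set a0 : Idx N r := Tuple Hs.
have Ha0 : [seq val x | x <- a0] = L by rewrite /= map_nseq.
rewrite (bigD1 a0) // Ha0 eqxx /=.
rewrite big1 ?addr0 // => a Ha.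
case: eqP => // Hm; move: Ha; rewrite -Ha0 in Hm.
by move/inj_map: Hm => /(_ val_inj) /val_inj ->; rewrite eqxx.
Qed.

Lemma swap_apply (N r : nat) (f : Idx N r -> C) (b : Idx N r) :
  \sum_c @Swap R N r b c * f c = f (rev_tuple b).
Proof.
rewrite (bigD1 (rev_tuple b)) //= /Swap /= revK eqxx mul1r big1 ?addr0 // => c Hc.
case: eqP => [Hb|]; last by rewrite mul0r.
by move: Hc; rewrite (_ : rev_tuple b = c) ?eqxx //; apply: val_inj; rewrite /= Hb revK.
Qed.

Lemma Swap_iso (N r : nat) : opmul (opadj (@Swap R N r)) (@Swap R N r) = @idop R (Idx N r).
Proof.
apply: funext => b; apply: funext => c; rewrite /opmul /opadj /idop.
under eq_bigr do rewrite /Swap rmorph_nat.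
have [<-|Hbc] := eqVneq b c; last first.
  apply: big1 => a _.
  case: eqP => [Ha|]; case: eqP => [Hb|] //; rewrite ?mul0r ?mulr0 //.
  move: Hbc; rewrite Ha in Hb; rewrite (_ : b = c) ?eqxx //; apply: val_inj => /=.
  by rewrite -[LHS]revK Hb revK.
under eq_bigr do rewrite nat_sq.
rewrite (bigD1 (rev_tuple b)) //= eqxx big1 ?addr0 // => a Ha.
case: eqP => // Hm; move: Ha; rewrite (_ : a = rev_tuple b) ?eqxx //; exact: val_inj.
Qed.

Lemma Mop_eq (N : nat) (H : 'M[C]_N) (Nb : 'I_N -> {set 'I_N}) (d : nat)
  (sigma : 'I_N -> 'I_N -> C) (r : nat) (T : op R (Idx N r) (Idx N r)) :
  (forall j, opapply T (fun b => @Pi R N r b j) = @Psi R N H Nb d sigma r j) ->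
  forall j k, Mop (@Pi R N r) (@Swap R N r) T j k =
   \sum_(b : Idx N r) conjc (@Psi R N H Nb d sigma r j b) * @Psi R N H Nb d sigma r k (rev_tuple b).
Proof.
move=> hT j k.
have E (i : 'I_N) (b : Idx N r) : \sum_e T b e * @Pi R N r e i = @Psi R N H Nb d sigma r i b.
  by rewrite -hT.
rewrite /Mop /opmul /opadj.
under eq_bigr do under eq_bigr do under eq_bigr do rewrite E.
under eq_bigr do under eq_bigr do rewrite swap_apply.
under eq_bigr do rewrite big_distrr /=.
rewrite exchange_big /=; apply: eq_bigr => b _.
rewrite -(E j b) rmorph_sum big_distrl /=; apply: eq_bigr => a _.
by rewrite rmorphM mulrA [conjc (T b a) * _]mulrC.
Qed.
End Fin.

Theorem mainTheorem4 (R : realType) (n d r : nat)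
  (H : 'M[R[i]]_(2 ^ n))
  (Nb : 'I_(2 ^ n) -> {set 'I_(2 ^ n)})
  (sigma : 'I_(2 ^ n) -> 'I_(2 ^ n) -> R[i])
  (T Tt : op R (Idx (2 ^ n) r) (Idx (2 ^ n) r)) (eps : R) :
  (* H Hermitian with max-norm at most 1 *)
  (forall j k, H j k = conjc (H k j)) ->
  (forall j k, ComplexField.Normc.normc (H j k) <= 1) ->
  (* neighbourhood structure *)
  (forall j, #|Nb j| = d) ->
  (forall j k, H j k != 0 -> k \in Nb j) ->
  (forall j k, (k \in Nb j) = (j \in Nb k)) ->
  (* the numbers sigma_{jk} *)
  (forall j k, ComplexField.Normc.normc (sigma j k) ^+ 2 = ComplexField.Normc.normc (H j k)) ->
  (forall j k, sigma j k * conjc (sigma k j) = conjc (H j k)) ->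
  (1 <= r)%N ->
  (* T^{(r)} unitary, mapping |j>|0>^{2r+1} to |Psi^{(r)}_j> *)
  unitary T ->
  (forall j, opapply T (fun b => @Pi R (2 ^ n) r b j) = @Psi R (2 ^ n) H Nb d sigma r j) ->
  0 <= eps ->
  unitary Tt ->
  opnorm (sub_op Tt T) <= eps / 2 ->
  opnorm (sub_op (opmul (opadj (@Pi R (2 ^ n) r)) (opmul (opadj Tt) (opmul (@Swap R (2 ^ n) r) (opmul Tt (@Pi R (2 ^ n) r)))))
                 (fun i j => mxpow ((d%:R)^-1 *: H) r i j))
    <= eps.
Proof.
move=> hherm hmax hcard hNb hsym hsigabs hsig hr hTu hT heps hTtu hclose.
have EM : Mop (@Pi R (2 ^ n) r) (@Swap R (2 ^ n) r) T =
          (fun i j => mxpow ((d%:R)^-1 *: H) r i j).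
  apply: funext => j; apply: funext => k.
  rewrite (Mop_eq hT); exact: core.
rewrite -EM.
exact: (perturb (Pi_iso R (2 ^ n) r) (Swap_iso R (2 ^ n) r) hTu hTtu hclose).
Qed.
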